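(* Let $G = (V, E)$ be a directed proximity graph whose finitely many nodes $V$ correspond to vectors of a finite set $\mathcal{D} \subset \mathbb{R}^d$ (each node identified with its vector), and let $q \in \mathbb{R}^d$ be a query. For a node $o$, let $\mathcal{N}_o = \{p \mid (p, o) \in E\}$. Then there exists a scalar $\bar{\mu}$ such that for every $\mu > \max(\bar{\mu}, 0)$ and every node $o$ on the search path of the greedy graph nearest neighbor search (GNNS) run with query $q' = \mu q$ and having $\mathcal{N}_o \neq \emptyset$, there is a node $p^* \in \mathcal{N}_o$ with $$p^* \in \Big\{\operatorname{argmax}_{p \in \mathcal{N}_o} \langle p, q\rangle\Big\} \cap \Big\{\operatorname{argmin}_{p \in \mathcal{N}_o} \lVert p - q'\rVert\Big\}.$$
   Context: A proximity graph on $\mathcal{D}$ is a directed graph whose nodes are the points of $\mathcal{D}$ and whose edges are chosen by some criterion (the criterion is arbitrary here). Greedy graph nearest neighbor search (GNNS) with query $x$: starting from entry nodes, it repeatedly takes the current best candidate node, inspects its neighbors in $G$, and moves toward / keeps the neighbors closest to $x$ in Euclidean distance (maintaining a bounded candidate pool), until no improvement is possible; the nodes it visits form its search path. $\lVert\cdot\rVert$ is the Euclidean norm and $\langle\cdot,\cdot\rangle$ the standard inner product. *)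

(* Defs.v *)
From HB Require Import structures.
From mathcomp Require Import all_boot all_order all_algebra.
Set Implicit Arguments. Unset Strict Implicit. Unset Printing Implicit Defensive.
Import Order.TTheory GRing.Theory Num.Theory.
Local Open Scope ring_scope.

Definition dotp (R : rcfType) (d : nat) (x y : 'rV[R]_d) : R :=
  \sum_(i < d) x ord0 i * y ord0 i.

Definition enorm (R : rcfType) (d : nat) (x : 'rV[R]_d) : R :=
  Num.sqrt (dotp x x).

(* in-neighbourhood N_o = { p | (p, o) \in E } of node o in the graph with
   edge relation E (E p o means (p, o) is an edge) *)
Definition in_nbrs (V : finType) (E : rel V) (o : V) : {set V} :=
  [set p | E p o].

(* Main.v *)
Require Import Defs.
From mathcomp Require Import all_boot all_order all_algebra.
From mathcomp Require Import ring lra.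
Import Order.TTheory GRing.Theory Num.Theory.
Local Open Scope ring_scope.

Lemma exmax (V : finType) (R : realDomainType) (A : {set V}) (f : V -> R) :
  A != set0 -> exists2 x, x \in A & forall y, y \in A -> f y <= f x.
Proof.
case/set0Pn => x0 H.
case: (@arg_maxP _ R V x0 (fun x => x \in A) f H) => x Hx Hmax.
by exists x.
Qed.

Lemma dotp_expand (R : rcfType) (d : nat) (a q : 'rV[R]_d) (mu : R) :
  dotp (a - mu *: q) (a - mu *: q) =
  dotp a a - 2 * mu * dotp a q + mu ^+ 2 * dotp q q.
Proof.
rewrite /dotp.
transitivity (\sum_(i < d) (a ord0 i * a ord0 i - (2 * mu) * (a ord0 i * q ord0 i)
   + mu ^+ 2 * (q ord0 i * q ord0 i))).
  by apply: eq_bigr => i _; rewrite !mxE; ring.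
by rewrite big_split /= sumrB -!mulr_sumr.
Qed.

Theorem theorem2 (R : rcfType) (d : nat) (V : finType)
    (vec : V -> 'rV[R]_d) (vec_inj : injective vec)
    (E : rel V) (q : 'rV[R]_d) (search_path : 'rV[R]_d -> {set V}) :
  exists mubar : R,
    forall mu : R, Num.max mubar 0 < mu ->
    forall o : V, o \in search_path (mu *: q) ->
      in_nbrs E o != set0 ->
      exists2 pstar : V, pstar \in in_nbrs E o &
        (forall p, p \in in_nbrs E o -> dotp (vec p) q <= dotp (vec pstar) q) /\
        (forall p, p \in in_nbrs E o ->
           enorm (vec pstar - mu *: q) <= enorm (vec p - mu *: q)).
Proof.
pose nn : V -> R := fun a => dotp (vec a) (vec a).
pose dq : V -> R := fun a => dotp (vec a) q.
pose t : V -> V -> R := fun a b => if dq b < dq a then `|nn a - nn b| / (2 * (dq a - dq b)) else 0.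
have tge0 : forall a b, 0 <= t a b.
  move=> a b; rewrite /t; case: ifP => // H.
  by apply: divr_ge0 => //; apply: mulr_ge0 => //; rewrite subr_ge0 ltW.
exists (\sum_a \sum_b t a b).
have tle : forall a b, t a b <= \sum_a \sum_b t a b.
  move=> a b.
  apply: (@le_trans _ _ (\sum_b t a b)).
    rewrite (bigD1 b) //=. rewrite lerDl; exact: sumr_ge0.
  rewrite [X in _ <= X](bigD1 a) //= lerDl; apply: sumr_ge0 => i _; exact: sumr_ge0.
move=> mu Hmu o _ Hne.
have Hmu1 : \sum_a \sum_b t a b < mu by move: Hmu; rewrite gt_max => /andP[].
have Hmu0 : 0 < mu by move: Hmu; rewrite gt_max => /andP[].
have [pm Hpm Hmax] := @exmax _ _ _ dq Hne.
pose S := [set p in in_nbrs E o | dq p == dq pm].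
have HS : S != set0 by apply/set0Pn; exists pm; rewrite inE Hpm eqxx.
have [ps Hps Hmin] := @exmax _ _ _ (fun p => - nn p) HS.
move: Hps; rewrite inE => /andP[HpsN /eqP Hpseq].
exists ps => //; split.
  by move=> p Hp; rewrite -/(dq p) -/(dq ps) Hpseq; apply: Hmax.
move=> p Hp; rewrite /enorm; apply: ler_wsqrtr.
rewrite !dotp_expand -/(nn p) -/(nn ps) -/(dq p) -/(dq ps).
have [Heq|Hne'] := eqVneq (dq p) (dq pm).
  have : - nn p <= - nn ps by apply: Hmin; rewrite inE Hp Heq eqxx.
  rewrite Hpseq Heq; lra.
have Hlt : dq p < dq ps by rewrite Hpseq lt_neqAle Hne' Hmax.
have Ht := tle ps p.
have Htp : t ps p < mu by apply: le_lt_trans Ht Hmu1.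
move: Htp; rewrite /t Hlt ltr_pdivrMr; last by rewrite mulr_gt0 // subr_gt0.
have := ler_norm (nn ps - nn p).
lra.
Qed.
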